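(* Let $p,q\in(0,1/2)$. If $K_{pq}$ is a twofold Cantor set, then $\frac{\log p}{\log q}\notin\mathbb Q$.
   Context: For $p,q\in(0,1/2)$ let $S_1(x)=px$, $S_2(x)=qx$, $S_3(x)=px+1-p$, $S_4(x)=qx+1-q$, let $K_{pq}$ be the attractor of $\{S_1,S_2,S_3,S_4\}$ (the unique nonempty compact $K\subset\mathbb R$ with $K=\bigcup_{i=1}^4S_i(K)$), and let $A=S_3(K_{pq})\cup S_4(K_{pq})$. $K_{pq}$ is called a twofold Cantor set if $S_1^m(A)\cap S_2^n(A)=\varnothing$ for all $m,n\in\mathbb N$. *)

(* Defs.v *)
From Stdlib Require Import Reals Rtopology ZArith.
Open Scope R_scope.

Definition S1 (p q : R) (x : R) : R := p * x.
Definition S2 (p q : R) (x : R) : R := q * x.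
Definition S3 (p q : R) (x : R) : R := p * x + 1 - p.
Definition S4 (p q : R) (x : R) : R := q * x + 1 - q.

Definition img (f : R -> R) (X : R -> Prop) : R -> Prop :=
  fun y => exists x, X x /\ y = f x.

(* K is the attractor of {S1,S2,S3,S4}: nonempty, compact, and
   K = S1(K) ∪ S2(K) ∪ S3(K) ∪ S4(K). (Such K is unique by Hutchinson.) *)
Definition is_attractor (p q : R) (K : R -> Prop) : Prop :=
  (exists x, K x) /\ compact K /\
  forall y, K y <-> (img (S1 p q) K y \/ img (S2 p q) K y \/
                     img (S3 p q) K y \/ img (S4 p q) K y).

Definition setA (p q : R) (K : R -> Prop) : R -> Prop :=
  fun y => img (S3 p q) K y \/ img (S4 p q) K y.

Definition twofold_cantor (p q : R) (K : R -> Prop) : Prop :=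
  forall m n : nat, (1 <= m)%nat -> (1 <= n)%nat ->
    forall y, ~ (img (Nat.iter m (S1 p q)) (setA p q K) y /\
                 img (Nat.iter n (S2 p q)) (setA p q K) y).

Definition is_rational (x : R) : Prop :=
  exists (a b : Z), b <> 0%Z /\ x = IZR a / IZR b.

(* Main.v *)
Require Import Defs.
From Stdlib Require Import Reals Rtopology ZArith Lra Lia.
Open Scope R_scope.

Lemma iter_lin (c : R) (m : nat) (x : R) :
  Nat.iter m (fun y => c * y) x = c ^ m * x.
Proof. induction m; simpl; [ring | rewrite IHm; ring]. Qed.

Theorem proposition5 (p q : R) (K : R -> Prop) :
  0 < p < 1/2 -> 0 < q < 1/2 ->
  is_attractor p q K ->
  twofold_cantor p q K ->
  ~ is_rational (ln p / ln q).
Proof.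
  intros Hp Hq [[k Hk] _] Htw [a [b [Hb Hx]]].
  assert (Hlp : ln p < 0) by (rewrite <- ln_1; apply ln_increasing; lra).
  assert (Hlq : ln q < 0) by (rewrite <- ln_1; apply ln_increasing; lra).
  assert (Hbr : IZR b <> 0) by (apply not_0_IZR; auto).
  assert (Hpos : ln p / ln q > 0).
  { unfold Rdiv. assert (/ ln q < 0) by (apply Rinv_lt_0_compat; lra). nra. }
  assert (Heq : IZR b * ln p = IZR a * ln q).
  { assert (ln p = IZR a / IZR b * ln q) by (rewrite <- Hx; field; lra).
    rewrite H; field; auto. }
  assert (Hab : IZR a * IZR b > 0).
  { rewrite Hx in Hpos. assert (IZR a = (IZR a / IZR b) * IZR b) by (field; auto). rewrite H. assert (IZR b * IZR b > 0) by (destruct (Rlt_or_le 0 (IZR b)); nra). nra. }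
  assert (Habs : INR (Z.abs_nat b) * ln p = INR (Z.abs_nat a) * ln q).
  { rewrite !INR_IZR_INZ, !Zabs2Nat.id_abs, !abs_IZR.
    unfold Rabs; destruct (Rcase_abs (IZR a)), (Rcase_abs (IZR b)); nra. }
  assert (Hpw : p ^ Z.abs_nat b = q ^ Z.abs_nat a).
  { apply ln_inv; try (apply pow_lt; lra). rewrite !ln_pow by lra. exact Habs. }
  assert (Hm : (1 <= Z.abs_nat b)%nat) by lia.
  assert (Ha : a <> 0%Z) by (intro; subst; simpl in Hab; lra).
  assert (Hn : (1 <= Z.abs_nat a)%nat) by lia.
  apply (Htw _ _ Hm Hn (p ^ Z.abs_nat b * S3 p q k)).
  split; exists (S3 p q k); split; try (left; exists k; auto).
  - exact (eq_sym (iter_lin p _ _)).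
  - rewrite Hpw; exact (eq_sym (iter_lin q _ _)).
Qed.
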